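(* Consider a convex compact visibility representation of a graph $G$, and let $A$ and $B$ be two of its regions that are mutually visible (so $AB$ is an edge of $G$). If some region other than $A$ and $B$ intersects some line segment joining a point of $A$ to a point of $B$, then the edge $AB$ lies in a triangle ($K_3$) of $G$.
   Context: All graphs are finite and simple. Given a family of pairwise disjoint nonempty connected subsets (''regions'') of $\mathbb{R}^2$, a sightline is a closed line segment $\overline{ab}$ with $a\in A$, $b\in B$ for two different regions $A\neq B$ of the family, such that the segment intersects no region of the family other than $A$ and $B$; two regions are mutually visible if there is a sightline between them. A visibility representation of a graph $G$ is such a family with one region per vertex, such that two distinct vertices are adjacent in $G$ if and only if their regions are mutually visible. A convex compact visibility representation is one in which every region is compact and convex. Vertices are identified with their regions. *)

(* Defs.v *)
From mathcomp Require Import all_boot all_order all_algebra.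
From mathcomp Require Import all_classical all_reals all_analysis.
Set Implicit Arguments. Unset Strict Implicit. Unset Printing Implicit Defensive.
Import Order.TTheory GRing.Theory Num.Theory.
Import numFieldNormedType.Exports.
Local Open Scope classical_set_scope.
Local Open Scope ring_scope.

Definition segment (R : realType) (a b : 'rV[R]_2) : set 'rV[R]_2 :=
  [set x | exists2 t : R, 0 <= t <= 1 & x = (1 - t) *: a + t *: b].

Definition convex_plane (R : realType) (S : set 'rV[R]_2) : Prop :=
  forall a b, S a -> S b -> segment a b `<=` S.

Definition sightline (R : realType) (V : finType) (F : V -> set 'rV[R]_2)
    (u v : V) (a b : 'rV[R]_2) : Prop :=
  [/\ u != v, F u a, F v b &
      forall w, w != u -> w != v -> segment a b `&` F w = set0].

Definition mutually_visible (R : realType) (V : finType)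
    (F : V -> set 'rV[R]_2) (u v : V) : Prop :=
  exists a b, sightline F u v a b.

Definition visibility_rep (R : realType) (V : finType) (e : rel V)
    (F : V -> set 'rV[R]_2) : Prop :=
  [/\ (forall v, F v !=set0),
      (forall v, connected (F v)),
      (forall u v, u != v -> F u `&` F v = set0) &
      (forall u v, u != v -> (e u v <-> mutually_visible F u v))].

Definition convex_compact_visibility_rep (R : realType) (V : finType)
    (e : rel V) (F : V -> set 'rV[R]_2) : Prop :=
  visibility_rep e F /\ (forall v, compact (F v) /\ convex_plane (F v)).

(* Main.v *)
Require Import Defs.
From mathcomp Require Import all_boot all_order all_algebra.
From mathcomp Require Import all_classical all_reals all_analysis.
From mathcomp Require Import ring lra.
Set Implicit Arguments. Unset Strict Implicit. Unset Printing Implicit Defensive.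
Import Order.TTheory GRing.Theory Num.Theory.
Import numFieldNormedType.Exports.
Local Open Scope classical_set_scope.
Local Open Scope ring_scope.

Definition lin (R : realType) (a b : 'rV[R]_2) (t : R) := (1 - t) *: a + t *: b.

Lemma lin0 (R : realType) (a b : 'rV[R]_2) : lin a b 0 = a.
Proof. by rewrite /lin subr0 scale1r scale0r addr0. Qed.
Lemma lin1 (R : realType) (a b : 'rV[R]_2) : lin a b 1 = b.
Proof. by rewrite /lin subrr scale0r add0r scale1r. Qed.
Lemma linlin (R : realType) (a b : 'rV[R]_2) s1 s2 m :
  lin (lin a b s1) (lin a b s2) m = lin a b ((1-m)*s1 + m*s2).
Proof. rewrite /lin; apply/rowP => i; rewrite !mxE; ring. Qed.
Lemma lin3 (R : realType) (q0 q1 p : 'rV[R]_2) t ts sk l : 1 - l*sk != 0 ->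
  lin (lin q0 q1 t) (lin (lin q0 q1 ts) p sk) l =
  lin (lin q0 q1 (((1-l)*t + l*(1-sk)*ts)/(1 - l*sk))) p (l*sk).
Proof. move=> h; rewrite /lin; apply/rowP => i; rewrite !mxE; field. exact: h. Qed.
Lemma segment_sym (R : realType) (a b : 'rV[R]_2) : segment a b = segment b a.
Proof.
suff H : forall a b : 'rV[R]_2, segment a b `<=` segment b a.
  by apply/seteqP; split; apply: H.
move=> u v x [t t01 ->]; exists (1 - t); first lra.
by apply/rowP => i; rewrite !mxE; ring.
Qed.
Lemma itv01 (R : realType) (x : R) : (`[0, 1]%classic : set R) x <-> 0 <= x <= 1.
Proof. by rewrite /= in_itv. Qed.
Lemma itvab (R : realType) (a b x : R) : (`[a, b]%classic : set R) x <-> a <= x <= b.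
Proof. by rewrite /= in_itv. Qed.
Lemma argmin (R : realType) (S : set (R * R)) (f : R * R -> R) :
  S !=set0 -> compact S -> continuous f ->
  exists2 c, S c & forall z, S z -> f c <= f z.
Proof.
move=> S0 cS cf; have [c cS' h] := compact_EVT_min S0 cS (continuous_subspaceT cf).
by exists c; [rewrite inE in cS' | move=> z Sz; apply: h; rewrite inE].
Qed.
Lemma argmax (R : realType) (S : set (R * R)) (f : R * R -> R) :
  S !=set0 -> compact S -> continuous f ->
  exists2 c, S c & forall z, S z -> f z <= f c.
Proof.
move=> S0 cS cf; have [c cS' h] := compact_EVT_max S0 cS (continuous_subspaceT cf).
by exists c; [rewrite inE in cS' | move=> z Sz; apply: h; rewrite inE].
Qed.
Lemma compact_Z (R : realType) (G : R * R -> 'rV[R]_2) (K : set 'rV[R]_2) (a b c d : R) :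
  continuous G -> closed K ->
  compact ((`[a, b] `*` `[c, d]) `&` (G @^-1` K)).
Proof.
move=> cG cK; apply: compact_closedI.
  by apply: compact_setX; exact: segment_compact.
by apply: preimage_closed => // x _; exact: cG.
Qed.
Lemma cont_fst (R : realType) : continuous (fun z : R * R => z.1).
Proof. by move=> z; exact: cvg_fst. Qed.
Lemma cont_snd (R : realType) : continuous (fun z : R * R => z.2).
Proof. by move=> z; exact: cvg_snd. Qed.
Lemma cont_G (R : realType) (q0 q1 p : 'rV[R]_2) :
  continuous (fun z : R * R => lin (lin q0 q1 z.1) p z.2).
Proof.
move=> z; rewrite /lin.
apply: (@continuousD _ _ _ (fun z : R * R => (1 - z.2) *: ((1 - z.1) *: q0 + z.1 *: q1)) (fun z => z.2 *: p)); last by apply: continuousZr_tmp; exact: cont_snd.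
apply: (@continuousZ _ _ _ (fun z : R * R => 1 - z.2) (fun z : R * R => (1 - z.1) *: q0 + z.1 *: q1)).
  by apply: cvgB; [exact: cvg_cst | exact: cont_snd].
apply: (@continuousD _ _ _ (fun z : R * R => (1 - z.1) *: q0) (fun z : R * R => z.1 *: q1)); last by apply: continuousZr_tmp; exact: cont_fst.
apply: continuousZr_tmp.
by apply: cvgB; [exact: cvg_cst | exact: cont_fst].
Qed.
Lemma closed_reg (R : realType) (S : set 'rV[R]_2) : compact S -> closed S.
Proof. by move=> cS; apply: compact_closed => //; exact: hausdorff_normed. Qed.
Lemma linlin1 (R : realType) (a b : 'rV[R]_2) s m :
  lin (lin a b s) b m = lin a b ((1-m)*s + m).
Proof. rewrite /lin; apply/rowP => i; rewrite !mxE; ring. Qed.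
Lemma linlin0 (R : realType) (a b : 'rV[R]_2) s m :
  lin a (lin a b s) m = lin a b (m*s).
Proof. rewrite /lin; apply/rowP => i; rewrite !mxE; ring. Qed.
Lemma fan (R : realType) (V : finType) (F : V -> set 'rV[R]_2)
  (Fcl : forall v, closed (F v)) (Fcv : forall v, convex_plane (F v))
  (Fdj : forall u v, u != v -> F u `&` F v = set0)
  (X Y : V) (q0 q1 p : 'rV[R]_2) :
  X != Y -> F X q0 -> F X q1 -> F Y p ->
  (forall w, w != X -> w != Y -> segment q0 p `&` F w = set0) ->
  (exists w, [/\ w != X, w != Y & segment q1 p `&` F w !=set0]) ->
  exists D, [/\ D != X, D != Y, mutually_visible F X D & mutually_visible F D Y].
Proof.
move=> XY Xq0 Xq1 Yp free [w0 [w0X w0Y [y0 [[s0 s01 ->] Fw0]]]].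
have dj : forall u v y, u != v -> F u y -> F v y -> False.
  by move=> u v y uv Fu Fv; have := Fdj _ _ uv; move/seteqP=> [/(_ y (conj Fu Fv))].
have qX : forall t, 0 <= t <= 1 -> F X (lin q0 q1 t).
  by move=> t t01; apply: (Fcv _ _ _ Xq0 Xq1); exists t.
pose G := fun z : R * R => lin (lin q0 q1 z.1) p z.2.
pose U := \bigcup_(w in [set w | w != X /\ w != Y]) F w.
have clU : closed U.
  by apply: closed_bigcup => [|w _]; [exact: finite_finset | exact: Fcl].
pose Z := (`[0, 1] `*` `[0, 1]) `&` (G @^-1` U).
have cZ : compact Z by apply: compact_Z => //; exact: cont_G.
have Z0 : Z !=set0.
  exists (1, s0); split; first by split; rewrite /= in_itv /=; lra.
  exists w0; first by split.
  rewrite /G /= lin1; exact: Fw0.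
have [[ts s1] [[ts01 s101] Uz] minZ] := argmin Z0 cZ (@cont_fst R).
move: ts01 s101; rewrite /= !in_itv /= => ts01 s101.
have minZ' : forall t s, 0 <= t <= 1 -> 0 <= s <= 1 ->
    forall w, w != X -> w != Y -> F w (G (t, s)) -> ts <= t.
  move=> t s t01 s01' w wX wY Fw; apply: (minZ (t, s)); split.
    by split; rewrite /= in_itv /=.
  by exists w.
pose Z2 := (`[ts, ts] `*` `[0, 1]) `&` (G @^-1` U).
have cZ2 : compact Z2 by apply: compact_Z => //; exact: cont_G.
have Z20 : Z2 !=set0.
  by exists (ts, s1); split => //; split; rewrite /= in_itv /=; lra.
have [[t2 sk] [[t2e sk01] [D /= [DX DY] FDx]] maxZ2] := argmax Z20 cZ2 (@cont_snd R).
move: t2e sk01; rewrite /= !in_itv /= => t2e sk01.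
have t2ts : t2 = ts by lra.
subst t2.
have maxZ2' : forall s, 0 <= s <= 1 ->
    forall w, w != X -> w != Y -> F w (G (ts, s)) -> s <= sk.
  move=> s s01' w wX wY Fw; apply: (maxZ2 (ts, s)); split.
    by split; rewrite /= in_itv /= ?lexx.
  by exists w.
pose x := G (ts, sk).
have ts0 : ts != 0.
  apply/eqP => ets; move: Uz; rewrite ets => -[w [wX wY] Fw].
  have := free w wX wY; move/seteqP=> [/(_ (G (0, s1))) H _]; apply: H; split => //.
  by exists s1 => //; rewrite /G /= lin0.
have sk1 : sk != 1.
  apply/eqP => esk; apply: (dj D Y x DY FDx).
  by rewrite /x /G /= esk lin1.
have qts : F X (lin q0 q1 ts) by apply: qX; lra.
have vis1 : mutually_visible F D Y.
  exists x, p; split => // w wD wY; apply/seteqP; split => // y [[mu mu01 ->] Fwy].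
  have ey : (1 - mu) *: x + mu *: p = G (ts, (1 - mu) * sk + mu).
    by rewrite /x /G /= -linlin1.
  case: (eqVneq mu 0) => [mu0|mu0].
    by apply: (dj w D x wD) => //; move: Fwy; rewrite mu0 subr0 scale1r scale0r addr0.
  have lt1 : sk < (1 - mu) * sk + mu.
    have : 0 < mu by rewrite lt_neqAle eq_sym mu0; case/andP: mu01.
    have : sk < 1 by rewrite lt_neqAle sk1; case/andP: sk01.
    nra.
  rewrite ey in Fwy.
  case: (eqVneq w X) => [wX|wX]; last first.
    have h : 0 <= (1 - mu) * sk + mu <= 1.
      by case/andP: mu01 => ? ?; case/andP: sk01 => ? ?; apply/andP; split; nra.
    by have := maxZ2' _ h w wX wY Fwy; lra.
  subst w.
  case: (eqVneq sk 0) => [sk0|sk0].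
    by apply: (dj D X x DX FDx); rewrite /x /G /= sk0 lin0.
  set s' := (1 - mu) * sk + mu in lt1 Fwy.
  have s'0 : 0 < s' by case/andP: sk01 => sk0' _; lra.
  apply: (dj D X x DX FDx); apply: (Fcv _ _ _ qts Fwy).
  exists (sk / s').
    apply/andP; split; first by apply: divr_ge0; [case/andP: sk01|lra].
    by rewrite ler_pdivrMr // mul1r; lra.
  rewrite /x /G /=.
  change ((1 - sk / s') *: lin q0 q1 ts + sk / s' *: lin (lin q0 q1 ts) p s')
    with (lin (lin q0 q1 ts) (lin (lin q0 q1 ts) p s') (sk / s')).
  by rewrite linlin0 divfK // gt_eqF.
pose H := fun z : R * R => lin (lin q0 q1 z.1) x z.2.
pose ZY := (`[0, ts] `*` `[0, 1]) `&` (H @^-1` F Y).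
have cZY : compact ZY by apply: compact_Z => //; exact: cont_G.
have sk1' : sk < 1 by rewrite lt_neqAle sk1; case/andP: sk01.
have ts0' : 0 < ts by rewrite lt_neqAle eq_sym ts0; case/andP: ts01.
have [t [t0 tts] tY] : exists t, [/\ 0 <= t, t < ts &
    forall l, 0 <= l <= 1 -> ~ F Y (H (t, l))].
  case: (pselect (ZY !=set0)) => [ZY0|ZYn]; last first.
    exists 0; split => // l l01 Yl.
    by apply: ZYn; exists (0, l); split => //; split; rewrite /= in_itv /= ?lexx //; lra.
  have [[tm lm] [[tm01 lm01] Ym] maxY] := argmax ZY0 cZY (@cont_fst R).
  move: tm01 lm01; rewrite /= !in_itv /= => tm01 lm01.
  case: (ltrP tm ts) => [tmts|tstm].
    exists ((tm + ts) / 2); split; [lra|lra|] => l l01 Yl.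
    have : ((tm + ts) / 2) <= tm.
      by apply: (maxY ((tm + ts) / 2, l)); split => //; split; rewrite /= in_itv /=; lra.
    lra.
  have tme : tm = ts by lra.
  subst tm; exfalso.
  have eH : H (ts, lm) = G (ts, lm * sk) by rewrite /H /G /= /x /G /= linlin0.
  have {}Ym : F Y (G (ts, lm * sk)) by rewrite -eH.
  have d0 : 0 < 1 - lm * sk by case/andP: lm01 => ? ?; case/andP: sk01 => ? ?; nra.
  apply: (dj D Y x DY FDx); apply: (Fcv _ _ _ Ym Yp).
  exists ((sk - lm * sk) / (1 - lm * sk)).
    apply/andP; split.
      by apply: divr_ge0; [case/andP: lm01 => ? ?; case/andP: sk01 => ? ?; nra | lra].
    by rewrite ler_pdivrMr // mul1r; case/andP: sk01 => ? ?; lra.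
  rewrite /x /G /=.
  change (lin (lin q0 q1 ts) p sk =
    lin (lin (lin q0 q1 ts) p (lm * sk)) p ((sk - lm * sk) / (1 - lm * sk))).
  rewrite linlin1; congr lin; field; lra.
exists D; split => //.
exists (lin q0 q1 t), x; split => //; first by rewrite eq_sym.
  by apply: qX; lra.
move=> w wX wD; apply/seteqP; split => // y [[l l01 ->] Fwy].
case: (eqVneq w Y) => [wY|wY].
  by subst w; apply: (tY l l01).
case: (eqVneq l 1) => [l1|l1].
  by apply: (dj w D x wD) => //; move: Fwy; rewrite l1 subrr scale0r add0r scale1r.
have l1' : l < 1 by rewrite lt_neqAle l1; case/andP: l01.
have d0 : 0 < 1 - l * sk by case/andP: l01 => ? ?; case/andP: sk01 => ? ?; nra.
have ey : (1 - l) *: lin q0 q1 t + l *: x =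
    G (((1 - l) * t + l * (1 - sk) * ts) / (1 - l * sk), l * sk).
  rewrite /x /G /=.
  change (lin (lin q0 q1 t) (lin (lin q0 q1 ts) p sk) l =
    lin (lin q0 q1 (((1 - l) * t + l * (1 - sk) * ts) / (1 - l * sk))) p (l * sk)).
  by apply: lin3; rewrite gt_eqF.
rewrite ey in Fwy.
set t'' := ((1 - l) * t + l * (1 - sk) * ts) / (1 - l * sk) in Fwy.
have t''lt : t'' < ts.
  rewrite /t'' ltr_pdivrMr //.
  have : 0 < (1 - l) * (ts - t) by apply: mulr_gt0; lra.
  nra.
have t''ge : 0 <= t''.
  apply: divr_ge0; last lra.
  case/andP: l01 => ? ?; case/andP: sk01 => ? ?; case/andP: ts01 => ? ?.
  have : 0 <= (1 - l) * t by apply: mulr_ge0; lra.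
  have : 0 <= l * (1 - sk) * ts by apply: mulr_ge0 => //; apply: mulr_ge0; lra.
  lra.
have h1 : 0 <= t'' <= 1 by lra.
have h2 : 0 <= l * sk <= 1.
  by case/andP: l01 => ? ?; case/andP: sk01 => ? ?; apply/andP; split; nra.
by have := minZ' _ _ h1 h2 w wX wY Fwy; lra.
Qed.

Theorem lemma1 (R : realType) (V : finType) (e : rel V)
    (F : V -> set 'rV[R]_2) :
  symmetric e -> irreflexive e ->
  convex_compact_visibility_rep e F ->
  forall A B : V, e A B ->
  (exists (C : V) (a b : 'rV[R]_2),
      [/\ C != A, C != B, F A a, F B b & segment a b `&` F C !=set0]) ->
  exists D : V, e A D && e B D.
Proof.
move=> esym eirr [[Fne Fconn Fdj evis] Fcc] A B eAB
  [C [a1 [b1 [CA CB Aa1 Bb1 [c [cseg Cc]]]]]].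
have Fcl : forall v, closed (F v) by move=> v; apply: closed_reg; exact: (Fcc v).1.
have Fcv : forall v, convex_plane (F v) by move=> v; exact: (Fcc v).2.
have AB : A != B by apply/eqP => AB; subst B; rewrite eirr in eAB.
have BA : B != A by rewrite eq_sym.
have [a0 [b0 [_ Aa0 Bb0 free0]]] := (evis A B AB).1 eAB.
case: (pselect (exists w, [/\ w != A, w != B & segment a1 b0 `&` F w !=set0]))
  => [ex|nex].
  have [D [DA DB vAD vDB]] := fan Fcl Fcv Fdj AB Aa0 Aa1 Bb0 free0 ex.
  exists D; apply/andP; split.
    by apply/(evis A D _).2 => //; rewrite eq_sym.
  by rewrite esym; apply/(evis D B DB).2.
have free1 : forall w, w != B -> w != A -> segment b0 a1 `&` F w = set0.
  move=> w wB wA; rewrite segment_sym; apply/seteqP; split => // y Hy.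
  by apply: nex; exists w; split => //; exists y.
have ex2 : exists w, [/\ w != B, w != A & segment b1 a1 `&` F w !=set0].
  by exists C; split => //; rewrite segment_sym; exists c.
have [D [DB DA vBD vDA]] := fan Fcl Fcv Fdj BA Bb0 Bb1 Aa1 free1 ex2.
exists D; apply/andP; split.
  by rewrite esym; apply/(evis D A DA).2.
by apply/(evis B D _).2 => //; rewrite eq_sym.
Qed.
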